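(* Let $E$ be a reflexive para-Hilbert space and let $\Psi_{X_E}\colon X_E\to X_E''$, $\Psi_{Y_E}\colon Y_E\to Y_E''$ be the canonical embeddings. Then $K_E:=J_E'\,\Psi_{Y_E}\colon Y_E\to X_E'$ is the unique isomorphism of Banach spaces satisfying $K_E\circ j_E=i_E'\circ I_E$. Moreover, $K_E'\,\Psi_{X_E}=J_E$.
   Context: A para-Hilbert space $E$ consists of Banach spaces $X_E,Y_E$, a Hilbert space $H_E$ with inner product and Riesz isomorphism $I_E\colon H_E\to H_E'$, bounded linear injections with dense image $i_E\colon X_E\to H_E$, $j_E\colon H_E\to Y_E$, and an isomorphism of Banach spaces $J_E\colon X_E\to Y_E'$ such that $j_E'\circ J_E=I_E\circ i_E$; here $Z'$ denotes the dual of a Banach space $Z$ and $T'$ the dual operator of $T$. $E$ is reflexive if $Y_E$ is a reflexive Banach space. *)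

(* Defs.v *)
From HB Require Import structures.
From mathcomp Require Import all_boot all_order all_algebra.
From mathcomp Require Import all_classical all_reals all_analysis.
Set Implicit Arguments. Unset Strict Implicit. Unset Printing Implicit Defensive.
Import Order.TTheory GRing.Theory Num.Theory.
Local Open Scope classical_set_scope.
Local Open Scope ring_scope.

Section ParaHilbert.
Variable R : realType.

Definition bounded_linear_functional (V : normedModType R) (f : V -> R) :=
  (forall (a : R) (x y : V), f (a *: x + y) = a * f x + f y) /\
  (exists C : R, forall x : V, `|f x| <= C * `|x|).

(** The (topological) dual V' : continuous = bounded linear functionals. *)
Record dual (V : normedModType R) := Dual {
  dual_fun :> V -> R;
  dual_funP : bounded_linear_functional dual_fun }.

Definition dnorm (V : normedModType R) (f : dual V) : R :=
  sup [set `|f x| | x in [set x : V | `|x| <= 1]].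

(** Linearity / boundedness of a functional on V' (i.e. membership in V''),
    stated without pointwise operations on the record type [dual V]. *)
Definition dual_linear (V : normedModType R) (phi : dual V -> R) :=
  forall (a : R) (f g h : dual V), (forall x, h x = a * f x + g x) ->
    phi h = a * phi f + phi g.

Definition bidual_elt (V : normedModType R) (phi : dual V -> R) :=
  dual_linear phi /\ (exists C : R, forall f, `|phi f| <= C * dnorm f).

Definition canon_emb (V : normedModType R) (v : V) : dual V -> R := fun f => f v.

Definition dualop (A B : Type) (T : A -> B) (phi : B -> R) : A -> R := phi \o T.

Definition reflexive_banach (V : normedModType R) :=
  forall phi : dual V -> R, bidual_elt phi -> exists v : V, phi = canon_emb v.

Definition dual_iso (W V : normedModType R) (K : W -> dual V) :=
  (forall (a : R) (w1 w2 : W) (v : V), K (a *: w1 + w2) v = a * K w1 v + K w2 v) /\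
  (exists C : R, forall w, dnorm (K w) <= C * `|w|) /\
  (exists G : dual V -> W,
     cancel K G /\ cancel G K /\ exists D : R, forall f, `|G f| <= D * dnorm f).

Definition bli_dense (A B : normedModType R) (T : A -> B) :=
  (forall (a : R) (x y : A), T (a *: x + y) = a *: T x + T y) /\
  (exists C : R, forall x, `|T x| <= C * `|x|) /\
  injective T /\ dense (range T).

Definition is_inner (H : normedModType R) (inner : H -> H -> R) :=
  (forall h k, inner h k = inner k h) /\
  (forall (a : R) (h1 h2 k : H), inner (a *: h1 + h2) k = a * inner h1 k + inner h2 k) /\
  (forall h, inner h h = `|h| ^+ 2).

Definition para_hilbert (X Y H : completeNormedModType R)
  (inner : H -> H -> R) (I : H -> dual H) (i : X -> H) (j : H -> Y)
  (J : X -> dual Y) :=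
  is_inner inner /\
  (forall h k, I h k = inner h k) /\
  bli_dense i /\ bli_dense j /\
  dual_iso J /\
  (forall x, (I (i x) : H -> R) = dualop j (J x)).

End ParaHilbert.

(* Main.v *)
Require Import Defs.
From HB Require Import structures.
From mathcomp Require Import all_boot all_order all_algebra.
From mathcomp Require Import all_classical all_reals all_analysis.
From mathcomp Require Import lra ring.
Import Order.TTheory GRing.Theory Num.Theory.
Local Open Scope classical_set_scope.
Local Open Scope ring_scope.

Section HahnBanach.
Set Implicit Arguments.
Variables (R : realType) (V : normedModType R) (v0 : V).

Definition lin_graph (G : set (V * R)) :=
  forall (s : R) p q, G p -> G q -> G (s *: p.1 + q.1, s * p.2 + q.2).
Definition dom_graph (G : set (V * R)) := forall p, G p -> p.2 <= `|p.1|.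
Definition base_graph : set (V * R) :=
  [set p | exists t : R, p = (t *: v0, t * `|v0|)].
Definition PG G := [/\ lin_graph G, dom_graph G & base_graph `<=` G].

Lemma PG0 G : PG G -> G (0, 0).
Proof.
case=> lG _ bG.
have b0 : G (0 *: v0, 0 * `|v0|) by apply: bG; exists 0.
have := lG (-1) _ _ b0 b0; rewrite /= scaleN1r mulN1r !addNr; exact.
Qed.

Lemma PG_fun G x a b : PG G -> G (x, a) -> G (x, b) -> a = b.
Proof.
move=> [lG dG bG] Ga Gb.
have h1 := dG _ (lG (-1) _ _ Ga Gb); have h2 := dG _ (lG (-1) _ _ Gb Ga).
move: h1 h2; rewrite /= scaleN1r mulN1r addNr normr0.
move=> h1 h2; apply/eqP; rewrite eq_le; apply/andP; split; lra.
Qed.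

Arguments PG0 {G}.
Arguments PG_fun {G x a b}.

Lemma PG_base : PG base_graph.
Proof.
split.
- move=> s _ _ [t ->] [u ->]; exists (s * t + u) => /=.
  by rewrite scalerDl scalerA mulrDl mulrA.
- move=> _ [t ->] /=; rewrite normrZ; apply: ler_wpM2r => //; exact: ler_norm.
- by [].
Qed.

Lemma PG_max : exists M, PG M /\ forall x, exists a, M (x, a).
Proof.
pose P'' := fun G : set (V * R) => G = set0 \/ PG G.
have [M [PM maxM]] : exists A, P'' A /\ forall B, A `<` B -> ~ P'' B.
  apply: Zorn_bigcup => F FP totF.
  have [->|/set0P Un] := eqVneq (\bigcup_(X in F) X) set0; first by left.
  right.
  have PGof X p : F X -> X p -> PG X.
    move=> FX Xp; case: (FP X FX) => // X0; by rewrite X0 in Xp.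
  split.
  - move=> s p q [X FX Xp] [Y FY Yq].
    case: (totF X Y FX FY) => [XY|YX].
    + exists Y => //; have [lY _ _] := PGof Y q FY Yq; exact: lY (XY _ Xp) Yq.
    + exists X => //; have [lX _ _] := PGof X p FX Xp; exact: lX Xp (YX _ Yq).
  - move=> p [X FX Xp]; have [_ dX _] := PGof X p FX Xp; exact: dX.
  - have [p [X FX Xp]] := Un; have [_ _ bX] := PGof X p FX Xp.
    by move=> q bq; exists X => //; exact: bX.
have {PM} PM : PG M.
  case: PM => // M0; exfalso; apply: (maxM base_graph); last by right; exact: PG_base.
  rewrite M0; split; first by [].
  move=> /(_ (0 *: v0, 0 * `|v0|)) h; have : (set0 : set (V * R)) (0 *: v0, 0 * `|v0|).
    by apply: h; exists 0.
  by [].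
exists M; split => // x1; apply: contrapT => /forallNP nx1.
have [lM dM bM] := PM.
have M00 := PG0 PM.
have key y b z d : M (y, b) -> M (z, d) -> b + d <= `|y - x1| + `|z + x1|.
  move=> My Mz; have := dM _ (lM 1 _ _ My Mz); rewrite /= scale1r mul1r => h.
  apply: (le_trans h); rewrite [y + z](_ : _ = (y - x1) + (z + x1)); last first.
    by rewrite addrCA subrK addrC.
  exact: ler_normD.
pose S := [set p.2 - `|p.1 - x1| | p in M].
pose c := sup S.
have Sne : S !=set0 by exists (0 - `|0 - x1|); exists (0, 0).
have Sub : ubound S (`|x1| - 0).
  move=> _ [[y b] My <-] /=; rewrite lerBlDr addrC addrA lerBrDr.
  have := key y b 0 0 My M00; rewrite add0r addr0; exact.
have c_lo y b : M (y, b) -> b - `|y - x1| <= c.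
  move=> My; apply: ub_le_sup; first by exists (`|x1| - 0).
  by exists (y, b).
have c_hi z d : M (z, d) -> c <= `|z + x1| - d.
  move=> Mz; apply: ge_sup => // _ [[y b] My <-] /=.
  rewrite lerBrDr; have := key _ _ _ _ My Mz; lra.
pose M' := [set p | exists y b t, M (y, b) /\ p = (y + t *: x1, b + t * c)].
have MM' : M `<=` M'.
  by move=> [y b] My; exists y, b, 0; rewrite scale0r mul0r !addr0.
have PM' : PG M'.
  split.
  - move=> s _ _ [y [b [t [My ->]]]] [z [d [u [Mz ->]]]] /=.
    exists (s *: y + z), (s * b + d), (s * t + u); split; first exact: (lM s _ _ My Mz).
    congr (_, _).
      rewrite scalerDr scalerA scalerDl -!addrA; congr (_ + _).
      by rewrite addrCA.
    by rewrite mulrDr mulrA mulrDl -!addrA; congr (_ + _); rewrite addrCA.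
  - move=> _ [y [b [t [My ->]]]] /=.
    have [t0|t0|->] := ltgtP t 0; last by rewrite scale0r mul0r !addr0; exact: (dM _ My).
    + have Mz : M (- t^-1 *: y, - t^-1 * b).
        by have := lM (- t^-1) _ _ My M00; rewrite /= !addr0.
      have nt : 0 < - t by rewrite oppr_gt0.
      have hb : - t * (- t^-1 * b) = b.
        by rewrite mulrA mulrNN mulfV ?lt_eqF // mul1r.
      have hw : `|y + t *: x1| = - t * `|- t^-1 *: y - x1|.
        rewrite -[X in X * _](gtr0_norm nt) -normrZ scalerBr scalerA mulrNN.
        by rewrite mulfV ?lt_eqF // scale1r scaleNr opprK.
      have h := ler_wpM2l (ltW nt) (c_lo _ _ Mz).
      rewrite mulrBr hb in h.
      rewrite hw; move: h; set w := `|_|; nra.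
    + have Mz : M (t^-1 *: y, t^-1 * b).
        by have := lM (t^-1) _ _ My M00; rewrite /= !addr0.
      have hb : t * (t^-1 * b) = b.
        by rewrite mulrA mulfV ?gt_eqF // mul1r.
      have hw : `|y + t *: x1| = t * `|t^-1 *: y + x1|.
        rewrite -[X in X * _](gtr0_norm t0) -normrZ scalerDr scalerA.
        by rewrite mulfV ?gt_eqF // scale1r.
      have h := ler_wpM2l (ltW t0) (c_hi _ _ Mz).
      rewrite mulrBr hb in h.
      rewrite hw; move: h; set w := `|_|; nra.
  - exact: subset_trans bM MM'.
apply: (maxM M'); last by right.
split => // /(_ (x1, c)) h.
apply: (nx1 c); apply: h; exists 0, 0, 1; split => //.
by rewrite scale1r mul1r !add0r.
Qed.

Lemma hahn_banach : exists f : V -> R,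
  (forall (a : R) x y, f (a *: x + y) = a * f x + f y) /\
  (forall x, `|f x| <= `|x|) /\ f v0 = `|v0|.
Proof.
have [M [PM tot]] := PG_max.
have [lM dM bM] := PM.
pose f x := projT1 (cid (tot x)).
have fP x : M (x, f x) by rewrite /f; case: cid.
have flin (a : R) x y : f (a *: x + y) = a * f x + f y.
  apply: (PG_fun PM (fP _)); exact: (lM a _ _ (fP x) (fP y)).
exists f; split => //; split.
- move=> x; rewrite ler_norml; apply/andP; split; last exact: (dM _ (fP x)).
  have := dM _ (fP (-x)) => /=.
  have -> : f (- x) = - f x.
    have := flin (-1) x 0.
    rewrite scaleN1r addr0 mulN1r => ->.
    suff -> : f 0 = 0 by rewrite addr0.
    by apply: (PG_fun PM (fP 0)); exact: PG0.
  by rewrite normrN lerNl.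
- apply: (PG_fun PM (fP v0)); apply: bM; exists 1; by rewrite scale1r mul1r.
Qed.

End HahnBanach.

Section DualFacts.
Set Implicit Arguments.
Variable R : realType.

Lemma dual_ext (V : normedModType R) (f g : dual V) :
  (forall x, f x = g x) -> f = g.
Proof.
case: f => f fP; case: g => g gP /= fg.
have efg : f = g by apply: funext.
subst g; congr Dual; exact: Prop_irrelevance.
Qed.

Lemma dual_lin (V : normedModType R) (f : dual V) (a : R) x y :
  f (a *: x + y) = a * f x + f y.
Proof. by case: (dual_funP f) => l _; exact: l. Qed.

Lemma dual0 (V : normedModType R) (f : dual V) : f 0 = 0.
Proof.
have := dual_lin f 1 0 0; rewrite scale1r addr0 mul1r => h.
lra.
Qed.

Lemma dualZ (V : normedModType R) (f : dual V) (a : R) x : f (a *: x) = a * f x.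
Proof. by have := dual_lin f a x 0; rewrite !addr0 dual0 addr0. Qed.

Lemma dnorm_has_ub (V : normedModType R) (f : dual V) :
  has_ubound [set `|f x| | x in [set x : V | `|x| <= 1]].
Proof.
case: (dual_funP f) => _ [C hC]; exists `|C| => _ [x /= x1 <-].
apply: (le_trans (hC x)); apply: (le_trans (y := `|C| * `|x|)).
  by apply: ler_wpM2r => //; exact: ler_norm.
by rewrite -[X in _ <= X]mulr1; apply: ler_wpM2l.
Qed.

Lemma dnorm_ge0 (V : normedModType R) (f : dual V) : 0 <= dnorm f.
Proof.
apply: (le_trans (y := `|f 0|)); first by [].
apply: ub_le_sup; first exact: dnorm_has_ub.
by exists 0 => //=; rewrite normr0.
Qed.

Lemma dnorm_ub (V : normedModType R) (f : dual V) x : `|f x| <= dnorm f * `|x|.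
Proof.
have [->|x0] := eqVneq x 0; first by rewrite dual0 !normr0 mulr0.
have nx : 0 < `|x| by rewrite normr_gt0.
pose u := `|x|^-1 *: x.
have hx : x = `|x| *: u by rewrite /u scalerA mulfV ?gt_eqF // scale1r.
rewrite [X in f X]hx dualZ normrM gtr0_norm // mulrC.
apply: ler_wpM2r; first exact: ltW.
apply: ub_le_sup; first exact: dnorm_has_ub.
exists u => //=; rewrite /u normrZ normrV ?unitfE ?gt_eqF // normr_id mulVf ?gt_eqF //.
Qed.

Lemma dnorm_le (V : normedModType R) (f : dual V) (B : R) :
  (forall x, `|x| <= 1 -> `|f x| <= B) -> dnorm f <= B.
Proof.
move=> hB; apply: ge_sup; first by exists `|f 0|; exists 0 => //=; rewrite normr0.
by move=> _ [x /= x1 <-]; exact: hB.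
Qed.

Lemma hb_dual (V : normedModType R) (v : V) :
  exists f : dual V, dnorm f <= 1 /\ f v = `|v|.
Proof.
have [f [fl [fb fv]]] := @hahn_banach _ _ v.
have fP : bounded_linear_functional f.
  by split => //; exists 1 => x; rewrite mul1r.
exists (Dual fP); split => //.
by apply: dnorm_le => x x1 /=; exact: le_trans (fb x) x1.
Qed.

End DualFacts.

Theorem proposition2p12 (R : realType) (X Y H : completeNormedModType R)
    (inner : H -> H -> R) (I : H -> dual H) (i : X -> H) (j : H -> Y)
    (J : X -> dual Y) :
  para_hilbert inner I i j J -> reflexive_banach Y ->
  exists K : Y -> dual X,
    (* K = J' \o Psi_Y *)
    (forall y : Y, (K y : X -> R) = dualop J (canon_emb y)) /\
    (* K is an isomorphism of Banach spaces with K \o j = i' \o I *)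
    dual_iso K /\
    (forall h : H, (K (j h) : X -> R) = dualop i (I h)) /\
    (* uniqueness *)
    (forall K2 : Y -> dual X, dual_iso K2 ->
       (forall h : H, (K2 (j h) : X -> R) = dualop i (I h)) -> K2 = K) /\
    (* K' \o Psi_X = J *)
    (forall x : X, (J x : Y -> R) = dualop K (canon_emb x)).
Proof.
move=> [[inS [inL inN]] [IE [[iL [[Ci iC] [iI idn]]] [[jL [[Cj jC] [jI jdn]]] [[JL [[CJ JC] [GJ [JG [GJ' [D GD]]]]]] JIij]]]]] refl.
have JCa x : dnorm (J x) <= `|CJ| * `|x|.
  exact: le_trans (JC x) (ler_wpM2r (normr_ge0 _) (ler_norm _)).
pose Kf y := fun x => J x y.
have KP y : bounded_linear_functional (Kf y).
  split; first by move=> a x1 x2; exact: JL.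
  exists (`|CJ| * `|y|) => x; rewrite /Kf.
  apply: le_trans (dnorm_ub (J x) y) _.
  rewrite mulrAC; apply: ler_wpM2r; [exact: normr_ge0 | exact: JCa].
pose K y := Dual (KP y).
have KE y x : K y x = J x y by [].
have Kinj : injective K.
  move=> y y' e; have e' x : J x y = J x y' by rewrite -!KE e.
  have [f [_ fv]] := @hb_dual _ _ (y - y').
  have h := dual_lin (J (GJ f)) (-1) y' y.
  rewrite (e' (GJ f)) mulN1r addNr GJ' scaleN1r addrC in h.
  by apply/eqP; rewrite -subr_eq0 -normr_eq0 -fv h.
have Ksurj g : exists y, K y = g.
  pose phi (f : dual Y) := g (GJ f).
  have GJlin (a : R) (f1 f2 h : dual Y) : (forall y, h y = a * f1 y + f2 y) -> GJ h = a *: GJ f1 + GJ f2.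
    move=> hh; apply: (can_inj JG); rewrite GJ'.
    by apply: dual_ext => y; rewrite JL !GJ' hh.
  have phiB : bidual_elt phi.
    split.
      by move=> a f1 f2 h hh; rewrite /phi (GJlin _ _ _ _ hh) dual_lin.
    exists (dnorm g * D) => f; rewrite /phi.
    apply: le_trans (dnorm_ub g _) _; rewrite -mulrA.
    apply: ler_wpM2l; [exact: dnorm_ge0 | exact: GD].
  have [y hy] := refl phi phiB.
  exists y; apply: dual_ext => x; rewrite KE.
  by have := congr1 (fun F => F (J x)) hy; rewrite /phi /canon_emb /= JG => <-.
pose GK g := projT1 (cid (Ksurj g)).
have GKP g : K (GK g) = g by rewrite /GK; case: cid.
have KB y : dnorm (K y) <= `|CJ| * `|y|.
  apply: dnorm_le => x x1; rewrite KE.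
  apply: le_trans (dnorm_ub _ _) _; apply: ler_wpM2r => //.
  apply: le_trans (JCa x) _.
  by rewrite -[X in _ <= X]mulr1; exact: ler_wpM2l.
have Kj h : (K (j h) : X -> R) = dualop i (I h).
  apply: funext => x; rewrite /dualop /K /Kf /=.
  have := congr1 (fun F => F h) (JIij x); rewrite /dualop /= => <-.
  by rewrite !IE inS.
exists K; split; first by move=> y; apply: funext.
split.
  split; first by move=> a y1 y2 x; rewrite !KE; exact: dual_lin.
  split; first by exists `|CJ|.
  exists GK; split; first by move=> y; apply: Kinj; rewrite GKP.
  split; first exact: GKP.
  exists `|D| => g; set y := GK g.
  have [f [f1 fy]] := @hb_dual _ _ y.
  have e : J (GJ f) y = g (GJ f) by rewrite -KE /y GKP.
  rewrite GJ' in e.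
  rewrite -fy e; apply: le_trans (ler_norm _) _.
  apply: le_trans (dnorm_ub g _) _; rewrite mulrC; apply: ler_wpM2r; first exact: dnorm_ge0.
  apply: le_trans (GD f) _.
  apply: (le_trans (y := `|D| * dnorm f)); first by apply: ler_wpM2r; [exact: dnorm_ge0 | exact: ler_norm].
  by rewrite -[X in _ <= X]mulr1; apply: ler_wpM2l.
split; first exact: Kj.
split; last by move=> x; apply: funext => y; rewrite /dualop /canon_emb.
move=> K2 [K2L [[C2 C2b] _]] K2j.
apply: funext => y; apply: dual_ext => x.
pose phi y := K2 y x - K y x.
have phiL (a : R) y1 y2 : phi (a *: y1 + y2) = a * phi y1 + phi y2.
  by rewrite /phi K2L !KE !dual_lin; lra.
have phij h : phi (j h) = 0.
  rewrite /phi; have := congr1 (fun F => F x) (K2j h); rewrite Kj /= => ->.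
  by rewrite subrr.
pose Mb := (`|C2| + `|CJ|) * `|x| + 1.
have Mb0 : 0 < Mb by rewrite /Mb ltr_wpDl // mulr_ge0 // addr_ge0.
have phiB w : `|phi w| <= Mb * `|w|.
  rewrite /phi; apply: le_trans (ler_normB _ _) _.
  have h1 : `|K2 w x| <= `|C2| * `|w| * `|x|.
    apply: le_trans (dnorm_ub _ _) _; apply: ler_wpM2r => //.
    exact: le_trans (C2b w) (ler_wpM2r (normr_ge0 _) (ler_norm _)).
  have h2 : `|K w x| <= `|CJ| * `|w| * `|x|.
    apply: le_trans (dnorm_ub _ _) _; apply: ler_wpM2r => //; exact: KB.
  apply: le_trans (lerD h1 h2) _.
  rewrite [X in X <= _](_ : _ = (`|C2| + `|CJ|) * `|x| * `|w|); last by ring.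
  by rewrite /Mb; apply: ler_wpM2r => //; rewrite lerDl.
apply/eqP; rewrite -subr_eq0 -normr_le0; apply/ler_addgt0Pr => e e0; rewrite add0r.
have r0 : 0 < e / Mb by rewrite divr_gt0.
have [z [bz [h _ hz]]] := jdn (ball y (e / Mb)) (ex_intro _ y (ballxx y r0)) (ball_open y _).
subst z; move: bz; rewrite -ball_normE /ball_ /= => bz.
have hy : y = 1 *: (y - j h) + j h by rewrite scale1r subrK.
have -> : K2 y x - Kf y x = phi (y - j h) by rewrite -/(phi y) {1}hy phiL phij addr0 mul1r.
apply: le_trans (phiB _) _.
have eM : e = e / Mb * Mb by rewrite divfK // gt_eqF.
rewrite [X in _ <= X]eM mulrC; apply: ler_wpM2r; first exact: ltW.
exact: ltW.
Qed.
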